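(* Consider the full information setting of online multiclass classification (every prediction reveals the true label $y_t$, i.e. the feedback graph is complete, so $\mathcal{Q}=[K]$, $\gamma_t=0$ and $v_t=1$ for all $t$). Suppose that for every round $t$, $\ell_t=\ell(\cdot,\mathbf{x}_t,y_t)$ is a regular surrogate loss with respect to $\ell$ with constant $L$, and that the OCO algorithm $\mathcal{A}$ satisfies, for some $h:\mathcal{W}\to\mathbb{R}_+$ and every $\mathbf{U}\in\mathcal{W}$, $\sum_{t=1}^T(\widehat\ell_t(\mathbf{W}_t)-\widehat\ell_t(\mathbf{U}))\le h(\mathbf{U})\sqrt{\sum_{t=1}^T\|\widehat{\mathbf{g}}_t\|^2}$ with $\widehat{\mathbf{g}}_t=v_t\nabla\ell_t(\mathbf{W}_t)$. Run Gappletron with $\mathcal{A}$ and a gap map $a:\mathbb{R}^{K\times d}\times\mathbb{R}^d\to[0,1]$ satisfying $a(\mathbf{W}_t,\mathbf{x}_t)=\ell(\mathbf{W}_t,\mathbf{x}_t,y_t^\star)$. Then for every $\delta\in(0,1)$, with probability at least $1-\delta$, $$\sum_{t=1}^T\mathbb{1}[y_t'\ne y_t]\le\sum_{t=1}^T\ell_t(\mathbf{U})+KLh(\mathbf{U})^2+\frac{3K+1}{2}\ln\frac1\delta\qquad\forall\,\mathbf{U}\in\mathcal{W}.$$ Furthermore, for all $\mathbf{U}\in\mathcal{W}$ such that $\sum_{t=1}^T\ell_t(\mathbf{U})=0$, with probability at least $1-\delta$, $\sum_{t=1}^T\mathbb{1}[y_t'\ne y_t]\le 4Lh(\mathbf{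U})^2+\frac{11}{4}\ln\frac1\delta$.
   Context: Setting: for $t=1,\dots,T$ an oblivious adversary fixes $\mathbf{x}_t\in\mathbb{R}^d$, $y_t\in[K]$; the learner predicts $y_t'\in[K]$ and then observes $y_t$. Predictors $\mathbf{W}\in\mathcal{W}\subseteq\mathbb{R}^{K\times d}$ ($\mathcal{W}$ convex), rows $\mathbf{W}^k$, identified with vectors of $\mathbb{R}^{Kd}$; $\|\cdot\|$ a fixed norm on $\mathbb{R}^{Kd}$. $\ell:\mathcal{W}\times\mathbb{R}^d\times[K]\to\mathbb{R}_+$ is convex in $\mathbf{W}$ with $\frac{K-1}{K}\ell(\mathbf{W},\mathbf{x},y)+\frac1K\ell(\mathbf{W},\mathbf{x},y^\star)\ge1$ for all $\mathbf{W},\mathbf{x}$ and all $y\ne y^\star:=\arg\max_k\langle\mathbf{W}^k,\mathbf{x}\rangle$; $\ell_t$ is a regular surrogate loss with constant $L>0$ if moreover $\|\nabla\ell_t(\mathbf{W})\|^2\le2L\ell_t(\mathbf{W})$ for all $\mathbf{W}\in\mathcal{W}$. Gappletron in this setting (general version: inputs revealing set $\mathcal{Q}$, minimum dominating set $S$ of the feedback graph with $|S|=\rho$, OCO algorithm $\mathcal{A}$, $\gamma\ge0$, gap map $a$): $\mathbf{W}_1$ from $\mathcal{A}$; at round $t$: $y_t^\star=\arg\max_k\langle\mathbf{W}_t^k,\mathbf{x}_t\rangle$; $\gamma_t=0$ if $y_t^\star\in\mathcal{Q}$ (always the case here); $a_t=a(\mathbf{W}_t,\mathbf{x}_t)$;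 $\zeta_t=\mathbb{1}[\gamma_t\le a_t]$; $\mathbf{p}_t'=(1-\zeta_ta_t-(1-\zeta_t)\gamma_t)\mathbf{e}_{y_t^\star}+\zeta_ta_t\frac1K\mathbf{1}+(1-\zeta_t)\frac{\gamma_t}{\rho}\mathbf{1}_S$ (here $\mathbf{p}_t'=(1-a_t)\mathbf{e}_{y_t^\star}+a_t\frac1K\mathbf{1}$); predict $y_t'\sim\mathbf{p}_t'$; $v_t=\mathbb{1}[y_t\text{ observed}]/P_t(y_t\text{ observed})=1$; $\widehat\ell_t=v_t\ell_t$ is fed to $\mathcal{A}$, which returns $\mathbf{W}_{t+1}$. *)

(* Defs.v *)
From HB Require Import structures.
From mathcomp Require Import all_boot all_order all_algebra.
From mathcomp Require Import all_classical all_reals all_analysis.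
Set Implicit Arguments. Unset Strict Implicit. Unset Printing Implicit Defensive.
Import Order.TTheory GRing.Theory Num.Theory.
Import numFieldNormedType.Exports.
Local Open Scope ring_scope.

Definition rowdot (R : realType) (K d : nat) (W : 'M[R]_(K, d)) (k : 'I_K)
  (x : 'rV[R]_d) : R := \sum_(j < d) W k j * x ord0 j.

Definition is_norm (R : realType) (K d : nat) (nrm : 'M[R]_(K, d) -> R) : Prop :=
  (forall A, 0 <= nrm A) /\ (forall A, nrm A = 0 -> A = 0) /\
  (forall (c : R) A, nrm (c *: A) = `|c| * nrm A) /\
  (forall A B, nrm (A + B) <= nrm A + nrm B).

(* Gradient of f at W: the matrix of partial derivatives, i.e. the matrix
   representing the differential 'd f W (meaningful when f is differentiable
   at W). *)
Definition gradient (R : realType) (K d : nat) (f : 'M[R]_(K, d) -> R)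
  (W : 'M[R]_(K, d)) : 'M[R]_(K, d) :=
  \matrix_(i, j) ('d f W (delta_mx i j : 'M[R]_(K, d))).

(* y* = an argmax_k <W^k, x> (ties broken by the selection map [sel]). *)
Definition is_argmax_sel (R : realType) (K d : nat)
  (sel : 'M[R]_(K, d) -> 'rV[R]_d -> 'I_K) : Prop :=
  forall W x k, rowdot W k x <= rowdot W (sel W x) x.

(* Gappletron's sampling distribution in full information:
   p'_t = (1 - a_t) e_{y*_t} + a_t (1/K) 1. *)
Definition gapp_prob (R : realType) (K : nat) (ystar : 'I_K) (a : R) (k : 'I_K) : R :=
  (1 - a) * (k == ystar)%:R + a / K%:R.

(* Probability of an event on the learner's random predictions
   (y'_1, ..., y'_T), drawn independently with y'_t ~ p t. *)
Definition prob_preds (R : realType) (K T : nat) (p : 'I_T -> 'I_K -> R)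
  (E : {ffun 'I_T -> 'I_K} -> Prop) : R :=
  \sum_(om : {ffun 'I_T -> 'I_K} | `[< E om >]) \prod_(t < T) p t (om t).

Definition mistakes (K T : nat) (y : 'I_T -> 'I_K) (om : {ffun 'I_T -> 'I_K}) : nat :=
  \sum_(t < T) (om t != y t).

(* Main.v *)
Require Import Defs.
From HB Require Import structures.
From mathcomp Require Import all_boot all_order all_algebra.
From mathcomp Require Import all_classical all_reals all_analysis.
From mathcomp Require Import ring lra.
Import Order.TTheory GRing.Theory Num.Theory.
Import numFieldNormedType.Exports.
Local Open Scope ring_scope.
Set Implicit Arguments. Unset Strict Implicit.

Lemma prod_sum_ffun (R : realType) (K T : nat) (f : 'I_T -> 'I_K -> R) :
  \sum_(om : {ffun 'I_T -> 'I_K}) \prod_(t < T) f t (om t) =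
  \prod_(t < T) \sum_(k < K) f t k.
Proof. by rewrite bigA_distr_bigA. Qed.

Lemma conc (R : realType) (K T : nat) (p : 'I_T -> 'I_K -> R) (Z : 'I_T -> 'I_K -> R)
  (p0 : forall t k, 0 <= p t k) (p1 : forall t, \sum_k p t k = 1)
  (Z01 : forall t k, Z t k = 0 \/ Z t k = 1) (lam : R) (delta : R) (d0 : 0 < delta) :
  prob_preds p (fun om => lam * \sum_t Z t (om t) <=
     (expR lam - 1) * \sum_t \sum_k p t k * Z t k + ln delta^-1) >= 1 - delta.
Proof.
set beta := expR lam - 1.
set Q := \sum_t \sum_k p t k * Z t k.
set E := (fun om : {ffun 'I_T -> 'I_K} => _).
have tot : \sum_(om : {ffun 'I_T -> 'I_K}) \prod_(t < T) p t (om t) = 1.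
  by rewrite prod_sum_ffun big1 // => t _; rewrite p1.
have Hpos : forall om : {ffun 'I_T -> 'I_K}, 0 <= \prod_(t < T) p t (om t).
  by move=> om; apply: prodr_ge0 => t _; apply: p0.
rewrite /prob_preds.
move: tot; rewrite (bigID (fun om => `[< E om >])) /= => tot.
suff : \sum_(om | ~~ `[< E om >]) \prod_(t < T) p t (om t) <= delta by lra.
set F := fun om : {ffun 'I_T -> 'I_K} =>
  \prod_(t < T) (p t (om t) * expR (lam * Z t (om t))) * (expR (- beta * Q) * delta).
apply: (@le_trans _ _ (\sum_(om | ~~ `[< E om >]) F om)).
  apply: ler_sum => om /asboolPn; rewrite /E => /negP; rewrite -ltNge => H.
  rewrite /F big_split /= -expR_sum -mulr_sumr -mulrA.
  rewrite -[X in X <= _]mulr1; apply: ler_wpM2l; first exact: Hpos.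
  have -> : delta = expR (- ln delta^-1).
    by rewrite lnV ?posrE // opprK lnK ?posrE.
  rewrite -!expRD; rewrite -expR0; rewrite ler_expR.
  move: H; rewrite /Q mulNr; lra.
apply: (@le_trans _ _ (\sum_om F om)).
  rewrite [X in _ <= X](bigID (fun om => ~~ `[< E om >])) /= lerDl.
  apply: sumr_ge0 => om _; rewrite /F; apply: mulr_ge0.
    by apply: prodr_ge0 => t _; apply: mulr_ge0; [exact: p0 | exact: (ltW (expR_gt0 _))].
  by apply: mulr_ge0; [exact: (ltW (expR_gt0 _)) | exact: ltW].
rewrite /F -mulr_suml (@prod_sum_ffun R K T (fun t k => p t k * expR (lam * Z t k))).
have step : forall t, \sum_k p t k * expR (lam * Z t k) = 1 + beta * \sum_k p t k * Z t k.
  move=> t; rewrite -{1}(p1 t) mulr_sumr -big_split /=; apply: eq_bigr => k _.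
  by case: (Z01 t k) => ->; rewrite /beta ?mulr0 ?expR0 ?mulr1; ring.
under eq_bigr do rewrite step.
rewrite mulrA -[X in _ <= X]mul1r; apply: ler_wpM2r; first exact: ltW.
apply: (@le_trans _ _ (expR (beta * Q) * expR (- beta * Q))); last first.
  by rewrite -expRD mulNr subrr expR0.
apply: ler_wpM2r; first exact: (ltW (expR_gt0 _)).
rewrite /Q mulr_sumr expR_sum; apply: ler_prod => t _; apply/andP; split.
  have qge : 0 <= \sum_k p t k * Z t k.
    by apply: sumr_ge0 => k _; case: (Z01 t k) => ->; rewrite ?mulr0 ?mulr1.
  rewrite -step; apply: sumr_ge0 => k _; apply: mulr_ge0 => //; exact: (ltW (expR_gt0 _)).
exact: expR_ge1Dx.
Qed.

Lemma prob_mono (R : realType) (K T : nat) (p : 'I_T -> 'I_K -> R)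
  (p0 : forall t k, 0 <= p t k) (E1 E2 : {ffun 'I_T -> 'I_K} -> Prop) :
  (forall om, E1 om -> E2 om) -> prob_preds p E1 <= prob_preds p E2.
Proof.
move=> H; rewrite /prob_preds [X in X <= _]big_mkcond [X in _ <= X]big_mkcond.
apply: ler_sum => om _.
case: (asboolP (E1 om)) => [h1|_].
  by rewrite (asboolT (H _ h1)).
case: (asboolP (E2 om)) => // _.
by apply: prodr_ge0 => t _; apply: p0.
Qed.

Lemma expR_up (R : realType) (mu : R) : expR mu * (1 - mu) <= 1.
Proof.
have h := expR_ge1Dx (- mu).
have e : expR mu * expR (- mu) = 1 by rewrite -expRD subrr expR0.
have ep := expR_gt0 mu.
by rewrite -{2}e; apply: ler_wpM2l; first exact: ltW.
Qed.

Lemma amgm (R : realType) {k L h v S SU : R} :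
  0 < k -> 0 < L -> 0 <= h -> 0 <= v -> v^+2 <= 2*L*S -> S - SU <= h*v ->
  (2*k-1)*S <= 2*k*(SU + k*L*h^+2).
Proof.
move=> k0 L0 h0 v0 hv hS.
have B : 0 <= S + 2*k^+2*L*h^+2 - 2*k*h*v.
  have : 0 <= (2*L) * (S + 2*k^+2*L*h^+2 - 2*k*h*v).
    have sq : 0 <= (v - 2*k*L*h)^+2 by apply: sqr_ge0.
    nra.
  by rewrite pmulr_rge0 //; lra.
have : k * (S - SU) <= k * (h*v) by rewrite ler_pM2l.
nra.
Qed.

Lemma arith1 (R : realType) (k L h v S SU Z Q lam beta l : R) :
 1 <= k -> 0 < L -> 0 <= h -> 0 <= v -> 0 <= S -> v^+2 <= 2*L*S -> S - SU <= h*v ->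
 lam = 2/(3*k+1) -> 0 <= beta -> beta*(2*k-2) <= lam*(2*k-1) ->
 Q <= (k-1)/k * S -> lam * Z <= beta*Q + l ->
 Z <= SU + k*L*h^+2 + (3*k+1)/2 * l.
Proof.
move=> k1 L0 h0 v0 S0 hv hS el b0 hb hQ hZ.
have k0 : 0 < k by lra.
have A := amgm k0 L0 h0 v0 hv hS.
have lam0 : 0 < lam by rewrite el divr_gt0 //; lra.
have e1 : beta * ((k-1)/k * S) = (beta*(2*k-2)) * (S / (2*k)).
  by field; lra.
have e2 : lam*(2*k-1)*(S/(2*k)) = lam * ((2*k-1)*S / (2*k)).
  by field; lra.
have A' : (2*k-1)*S / (2*k) <= SU + k*L*h^+2.
  by rewrite ler_pdivrMr; [rewrite [_ * (2 * k)]mulrC | lra].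
have C : beta * Q <= lam * (SU + k*L*h^+2).
  apply: (le_trans (ler_wpM2l b0 hQ)); rewrite e1.
  apply: (le_trans (ler_wpM2r _ hb)).
    by apply: divr_ge0 => //; lra.
  by rewrite e2; apply: ler_wpM2l => //; exact: ltW.
have D : lam * Z <= lam * (SU + k*L*h^+2 + (3*k+1)/2 * l).
  have : lam * ((3*k+1)/2) = 1 by rewrite el; field; lra.
  move=> E; rewrite mulrDr [X in _ <= _ + X]mulrA E mul1r; lra.
by rewrite ler_pM2l in D.
Qed.

Lemma arith2 (R : realType) (k L h v S Z Q beta l : R) :
 1 <= k -> 0 < L -> 0 <= h -> 0 <= v -> 0 <= S -> v^+2 <= 2*L*S -> S <= h*v ->
 0 <= beta -> beta <= 7/9 -> 0 <= l ->
 Q <= (k-1)/k * S -> 1/2 * Z <= beta*Q + l ->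
 Z <= 4 * L * h ^+ 2 + 11 / 4 * l.
Proof.
move=> k1 L0 h0 v0 S0 hv hS b0 hb l0 hQ hZ.
have k0 : 0 < k by lra.
have Q1 : (k-1)/k * S <= S.
  apply: ler_piMl => //; rewrite ler_pdivrMr //; lra.
have S2 : S <= 2*L*h^+2.
  have : S * S <= (2*L*h^+2) * S.
    apply: (le_trans (ler_wpM2l S0 hS)).
    have : S * (h*v) <= (h*v)*(h*v) by apply: ler_wpM2r => //; apply: mulr_ge0.
    have : (h*v)*(h*v) <= h^+2 * (2*L*S) by rewrite (_ : (h*v)*(h*v) = h^+2 * v^+2); [apply: ler_wpM2l => //; exact: sqr_ge0 | ring].
    nra.
  case: (ltrgt0P S) => [Sp|Sn|->]; last by rewrite mulr_ge0 //; [lra|exact: sqr_ge0].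
    by rewrite ler_pM2r.
  lra.
have : Q <= 2*L*h^+2 by lra.
nra.
Qed.

Lemma beta1 (R : realType) (k : R) : 1 <= k ->
  (expR (2/(3*k+1)) - 1)*(2*k-2) <= 2/(3*k+1)*(2*k-1).
Proof.
move=> k1.
set m := 3*k+1.
have m0 : 0 < m by rewrite /m; lra.
set e := expR (1/m).
have e0 : 0 < e := expR_gt0 _.
have -> : expR (2/m) = e * e by rewrite -expRD; congr expR; rewrite /m; field; lra.
have he : e * (3*k) <= m.
  have := expR_up (1/m); rewrite -/e.
  have -> : 1 - 1/m = 3*k/m by rewrite /m; field; lra.
  by rewrite mulrA ler_pdivrMr // mul1r.
have H1 : (e*(3*k))^+2 <= m^+2.
  rewrite lerXn2r ?nnegrE //. all: try (apply: mulr_ge0; lra). all: try lra.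
have k0 : 0 < k by lra.
have H2 : (e*e-1)*(2*k-2) * (9*k^+2) <= 2*(2*k-1)/m * (9*k^+2).
  have -> : (e*e-1)*(2*k-2)*(9*k^+2) = ((e*(3*k))^+2 - 9*k^+2)*(2*k-2) by ring.
  apply: (le_trans (ler_wpM2r (_ : 0 <= 2*k-2) (lerB H1 (lexx (9*k^+2))))); first lra.
  rewrite (_ : 2*(2*k-1)/m*(9*k^+2) = (2*(2*k-1)*(9*k^+2))/m); last by field; lra.
  rewrite ler_pdivlMr // /m.
  nra.
rewrite ler_pM2r in H2; last by apply: mulr_gt0; [lra | apply: exprn_gt0].
have -> : 2/m*(2*k-1) = 2*(2*k-1)/m by field; lra.
exact: H2.
Qed.

Lemma beta2 (R : realType) : expR (1/2 : R) - 1 <= 7/9.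
Proof.
set e := expR (1/4 : R).
have e0 : 0 < e := expR_gt0 _.
have -> : expR (1/2 : R) = e * e by rewrite -expRD; congr expR; field.
have he : e * (3/4) <= 1.
  have := expR_up (1/4 : R); rewrite -/e.
  by have -> : 1 - 1/4 = 3/4 :> R by field.
nra.
Qed.

Lemma nn1 (R : realType) (k L hh l : R) : 0 <= k -> 0 < L -> 0 <= l ->
  0 <= 0 + k*L*hh^+2 + (3*k+1)/2 * l.
Proof.
move=> k0 L0 l0; have := sqr_ge0 hh => hh0.
rewrite add0r; apply: addr_ge0; first by apply: mulr_ge0 => //; apply: mulr_ge0 => //; exact: ltW.
by apply: mulr_ge0 => //; apply: divr_ge0 => //; lra.
Qed.

Lemma nn2 (R : realType) (L hh l : R) : 0 < L -> 0 <= l -> 0 <= 4*L*hh^+2 + 11/4 * l.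
Proof.
move=> L0 l0; have := sqr_ge0 hh => hh0.
apply: addr_ge0; first by apply: mulr_ge0 => //; apply: mulr_ge0 => //; lra.
by apply: mulr_ge0 => //; lra.
Qed.

Lemma lam_ge0 (R : realType) (k : R) : 0 <= k -> 0 <= 2/(3*k+1).
Proof. by move=> k0; apply: divr_ge0; lra. Qed.

Lemma b_ge0 (R : realType) (lam : R) : 0 <= lam -> 0 <= expR lam - 1.
Proof. by move=> l0; have := expR_ge1Dx lam; lra. Qed.

Theorem theorem3
  (R : realType) (K d T : nat)
  (Ws : set 'M[R]_(K, d)) (HWs : convex_set Ws)
  (nrm : 'M[R]_(K, d) -> R) (Hnrm : is_norm nrm)
  (sel : 'M[R]_(K, d) -> 'rV[R]_d -> 'I_K) (Hsel : is_argmax_sel sel)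
  (ell : 'M[R]_(K, d) -> 'rV[R]_d -> 'I_K -> R)
  (x : 'I_T -> 'rV[R]_d) (y : 'I_T -> 'I_K)
  (L : R) (HL : 0 < L)
  (* ell : W x R^d x [K] -> R_+, convex in W *)
  (Hell_nonneg : forall W xx k, Ws W -> 0 <= ell W xx k)
  (Hell_conv : forall xx k, convex_function Ws (fun W => ell W xx k))
  (* surrogate condition, y* = argmax_k <W^k, x> *)
  (Hell_surr : forall W xx yy, Ws W -> yy != sel W xx ->
     (K%:R - 1) / K%:R * ell W xx yy + K%:R^-1 * ell W xx (sel W xx) >= 1)
  (* each ell_t is a regular surrogate loss with constant L *)
  (Hreg : forall (t : 'I_T) W, Ws W ->
     differentiable (fun V => ell V (x t) (y t)) W /\
     nrm (gradient (fun V => ell V (x t) (y t)) W) ^+ 2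
       <= 2 * L * ell W (x t) (y t))
  (* iterates W_1, ..., W_T produced by the OCO algorithm A on the losses
     hat ell_t = ell_t (full information: v_t = 1) *)
  (W : 'I_T -> 'M[R]_(K, d)) (HW : forall t, Ws (W t))
  (h : 'M[R]_(K, d) -> R) (Hh : forall U, Ws U -> 0 <= h U)
  (HA : forall U, Ws U ->
     \sum_(t < T) (ell (W t) (x t) (y t) - ell U (x t) (y t))
       <= h U * Num.sqrt (\sum_(t < T)
             nrm (gradient (fun V => ell V (x t) (y t)) (W t)) ^+ 2))
  (* gap map a : R^{K x d} x R^d -> [0,1] *)
  (a : 'M[R]_(K, d) -> 'rV[R]_d -> R)
  (Ha : forall V xx, 0 <= a V xx <= 1)
  (Hagap : forall t, a (W t) (x t) = ell (W t) (x t) (sel (W t) (x t))) :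
  let p : 'I_T -> 'I_K -> R :=
    fun t => gapp_prob (sel (W t) (x t)) (a (W t) (x t)) in
  (forall delta : R, 0 < delta < 1 ->
     prob_preds p (fun om => forall U, Ws U ->
        (mistakes y om)%:R <= \sum_(t < T) ell U (x t) (y t)
                              + K%:R * L * h U ^+ 2
                              + (3 * K%:R + 1) / 2 * ln (delta^-1))
     >= 1 - delta)
  /\
  (forall U, Ws U -> \sum_(t < T) ell U (x t) (y t) = 0 ->
   forall delta : R, 0 < delta < 1 ->
     prob_preds p (fun om =>
        (mistakes y om)%:R <= 4 * L * h U ^+ 2 + 11 / 4 * ln (delta^-1))
     >= 1 - delta).
Proof.
move=> p.
have Kpos : forall t : 'I_T, (0 < K)%N.
  by move=> t; exact: (leq_ltn_trans (leq0n _) (ltn_ord (y t))).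
have p0 : forall t k, 0 <= p t k.
  move=> t k; rewrite /p /gapp_prob; have /andP[a0 a1] := Ha (W t) (x t).
  apply: addr_ge0; first by apply: mulr_ge0; [rewrite subr_ge0 | case: (k == _)].
  by apply: divr_ge0.
have p1 : forall t, \sum_k p t k = 1.
  move=> t; rewrite /p /gapp_prob big_split /=.
  rewrite (bigD1 (sel (W t) (x t))) //= eqxx big1 ?addr0; last first.
    by move=> k /negbTE ->; rewrite mulr0.
  have K0 : K%:R != 0 :> R by rewrite pnatr_eq0 -lt0n Kpos.
  rewrite sumr_const card_ord -mulr_natr mulr1; field; exact: K0.
pose Z := fun (t : 'I_T) (k : 'I_K) => ((k != y t)%:R : R).
have Z01 : forall t k, Z t k = 0 \/ Z t k = 1.
  by move=> t k; rewrite /Z; case: (k != y t); [right | left].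
pose S := \sum_(t < T) ell (W t) (x t) (y t).
pose Q := \sum_(t < T) \sum_k p t k * Z t k.
have qb : forall t, \sum_k p t k * Z t k <= (K%:R-1)/K%:R * ell (W t) (x t) (y t).
  move=> t.
  have K0 : K%:R != 0 :> R by rewrite pnatr_eq0 -lt0n (Kpos t).
  have -> : \sum_k p t k * Z t k = 1 - p t (y t).
    rewrite -(p1 t) (bigD1 (y t)) //= [in RHS](bigD1 (y t)) //= /Z eqxx mulr0 add0r.
    rewrite [p t (y t) + _]addrC addrK; apply: eq_bigr => k ->; by rewrite mulr1.
  rewrite /p /gapp_prob; have hg := Hagap t.
  case: eqP => [ey|ne].
    rewrite ey -hg mulr1.
    have -> : 1 - ((1 - a (W t) (x t)) + a (W t) (x t) / K%:R)
        = (K%:R-1)/K%:R * a (W t) (x t) by field.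
    by [].
  have hh := Hell_surr (W t) (x t) (y t) (HW t) (introN eqP ne).
  rewrite -hg in hh.
  by rewrite mulr0 add0r lerBlDr; rewrite [K%:R^-1 * _]mulrC in hh.
have hQ : Q <= (K%:R-1)/K%:R * S.
  by rewrite /S mulr_sumr; apply: ler_sum => t _; apply: qb.
pose G := \sum_(t < T) nrm (gradient (fun V => ell V (x t) (y t)) (W t)) ^+ 2.
have G0 : 0 <= G by apply: sumr_ge0 => t _; apply: sqr_ge0.
have hG : G <= 2 * L * S.
  by rewrite /S mulr_sumr; apply: ler_sum => t _; exact: (Hreg t (W t) (HW t)).2.
pose v := Num.sqrt G.
have v0 : 0 <= v by apply: sqrtr_ge0.
have hv : v ^+ 2 <= 2 * L * S by rewrite /v sqr_sqrtr.
have S0 : 0 <= S by apply: sumr_ge0 => t _; apply: Hell_nonneg.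
have hS : forall U, Ws U -> S - \sum_(t < T) ell U (x t) (y t) <= h U * v.
  by move=> U HU; rewrite /S -sumrB; apply: HA.
have mE : forall om, (mistakes y om)%:R = \sum_t Z t (om t) :> R.
  by move=> om; rewrite /mistakes natr_sum.
have noT : K = 0%N -> forall F : 'I_T -> R, \sum_t F t = 0.
  move=> K0 F; apply: big1 => t _; have : (val (y t) < K)%N := ltn_ord (y t); move: (val (y t)) => n; by rewrite K0.
split.
  move=> delta /andP[d0 d1].
  have l0 : 0 <= ln (delta^-1) by apply: ln_ge0; rewrite invf_ge1 //; exact: ltW.
  set lam := 2 / (3 * K%:R + 1) : R.
  apply: (le_trans (conc p0 p1 Z01 lam d0)).
  apply: prob_mono => // om H U HU; rewrite mE.
  case: (posnP K) => [K0 | Kp].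
    by rewrite !(noT K0); apply: nn1.
  have k1 : 1 <= K%:R :> R by rewrite ler1n.
  have lam0 : 0 <= lam by apply: lam_ge0; exact: ler0n.
  have b0 : 0 <= expR lam - 1 by apply: b_ge0.
  exact: (arith1 k1 HL (Hh U HU) v0 S0 hv (hS U HU) erefl b0 (beta1 k1) hQ H).
move=> U HU SU0 delta /andP[d0 d1].
have l0 : 0 <= ln (delta^-1) by apply: ln_ge0; rewrite invf_ge1 //; exact: ltW.
apply: (le_trans (conc p0 p1 Z01 (1/2) d0)).
apply: prob_mono => // om H; rewrite mE.
case: (posnP K) => [K0 | Kp].
  by rewrite !(noT K0); apply: nn2.
have k1 : 1 <= K%:R :> R by rewrite ler1n.
have b0 : 0 <= expR (1/2 : R) - 1 by apply: b_ge0.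
have hS' := hS U HU; rewrite SU0 subr0 in hS'.
exact: (arith2 k1 HL (Hh U HU) v0 S0 hv hS' b0 (beta2 R) l0 hQ H).
Qed.
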